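(* Let $G$ be a graph of order $n$ with $\alpha(G)=2$. Then $m_G[0,n-2]=2$ if and only if $G \cong K_1 \nabla K_{n-m} \nabla K_{m-1}$ for some integer $m$ with $2\le m\le n$; equivalently, $G\cong (K_1\cup K_{m-1})\nabla K_{n-m}$ (where $K_0$ denotes the empty graph).
   Context: All graphs are finite and simple. The Laplacian matrix of $G$ is $L(G)=D(G)-A(G)$ ($D(G)$ the diagonal degree matrix, $A(G)$ the adjacency matrix); its eigenvalues with multiplicity are the Laplacian eigenvalues. For an interval $I$, $m_G I$ is the number of Laplacian eigenvalues of $G$ (with multiplicity) in $I$. $\alpha(G)$ is the independence number. $K_k$ is the complete graph on $k$ vertices, $G_1\cup G_2$ is disjoint union. For pairwise disjoint graphs $G_1,\dots,G_k$, $G_1\nabla G_2\nabla\cdots\nabla G_k$ is the graph obtained from $G_1\cup\cdots\cup G_k$ by adding all edges $xy$ with $x\in V(G_i)$, $y\in V(G_{i+1})$ for $i=1,\dots,k-1$; in particular $G_1\nabla G_2$ is the join. *)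

(* Defs.v *)
From HB Require Import structures.
From mathcomp Require Import all_boot all_order all_algebra.
From mathcomp Require Import polyrcf.
Set Implicit Arguments. Unset Strict Implicit. Unset Printing Implicit Defensive.
Import Order.TTheory GRing.Theory Num.Theory.
Local Open Scope ring_scope.

Definition simple_graph (T : finType) (e : rel T) :=
  symmetric e /\ irreflexive e.

Definition independent (T : finType) (e : rel T) (S : {set T}) :=
  [forall x in S, forall y in S, ~~ e x y].

Definition alpha (T : finType) (e : rel T) : nat :=
  \max_(S : {set T} | independent e S) #|S|.

Definition deg (T : finType) (e : rel T) (x : T) : nat := #|[set y | e x y]|.

Definition adjmx (R : nzRingType) (T : finType) (e : rel T) : 'M[R]_#|T| :=
  \matrix_(i, j) (e (enum_val i) (enum_val j))%:R.
Definition degmx (R : nzRingType) (T : finType) (e : rel T) : 'M[R]_#|T| :=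
  \matrix_(i, j) ((i == j)%:R * (deg e (enum_val i))%:R).
Definition laplacian (R : nzRingType) (T : finType) (e : rel T) : 'M[R]_#|T| :=
  degmx R e - adjmx R e.

Definition mG_closed (R : rcfType) (T : finType) (e : rel T) (a b : R) : nat :=
  let p := char_poly (laplacian R e) in
  \sum_(x <- rootsR p | (a <= x) && (x <= b)) (mup x p : nat).

(* The graph K_1 \nabla K_{n-m} \nabla K_{m-1} on vertex set 'I_n:
   block 0 = {0} (K_1), block 1 = {1,...,n-m} (K_{n-m}),
   block 2 = {n-m+1,...,n-1} (K_{m-1}); two distinct vertices are adjacent
   iff they lie in the same block (complete graphs) or in consecutive blocks
   (the sequential join). *)
Definition block (n m : nat) (i : 'I_n) : nat :=
  if (i == 0 :> nat) then 0 else if (i <= n - m)%N then 1 else 2.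

Definition K1_KK (n m : nat) : rel 'I_n :=
  fun i j => (i != j) &&
    [|| block m i == block m j, (block m i).+1 == block m j
      | (block m j).+1 == block m i].

Definition isomorphic (T : finType) (e : rel T) (n : nat) (e' : rel 'I_n) :=
  exists f : T -> 'I_n, bijective f /\ forall x y, e x y = e' (f x) (f y).
Arguments K1_KK : clear implicits.

(* Main.v *)
Require Import Defs.
From HB Require Import structures.
From mathcomp Require Import all_boot all_order all_algebra.
From mathcomp Require Import polyrcf complex spectral sesquilinear.
From mathcomp Require Import ring lra zify.
Set Implicit Arguments. Unset Strict Implicit. Unset Printing Implicit Defensive.
Import Order.TTheory GRing.Theory Num.Theory Num.Def.
Local Open Scope ring_scope.
Local Open Scope sesquilinear_scope.

Lemma not_row_free_ker (F : fieldType) m n (B : 'M[F]_(m, n)) :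
  ~~ row_free B -> exists2 z : 'rV_m, z != 0 & z *m B = 0.
Proof.
move=> nrf.
have : kermx B != 0.
  rewrite -mxrank_eq0 mxrank_ker; move: nrf; rewrite /row_free.
  by rewrite -lt0n subn_gt0 ltn_neqAle rank_leq_row andbT.
move=> /eqP Kn0.
have [i Hi] : exists i, row i (kermx B) != 0.
  apply/existsP; apply: contraT; rewrite negb_exists => /forallP H.
  by case: Kn0; apply/row_matrixP => i; rewrite row0; apply/eqP; rewrite -[_ == _]negbK H.
exists (row i (kermx B)) => //; apply/sub_kermxP; exact: row_sub.
Qed.

Lemma char_poly_simil (F : fieldType) n (P D : 'M[F]_n) : P \in unitmx ->
  char_poly (invmx P *m D *m P) = char_poly D.
Proof.
move=> Pu; rewrite /char_poly.
have -> : char_poly_mx (invmx P *m D *m P) =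
   map_mx polyC (invmx P) *m char_poly_mx D *m map_mx polyC P.
  rewrite /char_poly_mx mulmxBr mulmxBl -!map_mxM; congr (_ - _).
  by rewrite scalar_mxC -mulmxA -map_mxM mulVmx // map_mx1 mulmx1.
rewrite !det_mulmx mulrC mulrA -det_mulmx.
by rewrite -map_mxM mulmxV // map_mx1 det1 mul1r.
Qed.

Lemma sum_count_mem (I : eqType) (l s : seq I) (Q : pred I) :
  uniq l -> {subset s <= l} ->
  (\sum_(x <- l | Q x) count_mem x s = count Q s)%N.
Proof.
move=> ul; elim: s => [|y s IH] sub.
  by rewrite big1 //.
rewrite /= big_split /= IH; last by move=> z zs; apply: sub; rewrite inE zs orbT.
congr (_ + _)%N.
rewrite (@big_rem _ _ _ _ l y); last exact: (sub y (mem_head _ _)). rewrite eqxx big1_seq ?addn0.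
  by case: (Q y).
move=> x /andP [_ xr]; case: eqP => // yx; subst x.
by move: xr; rewrite mem_rem_uniqF.
Qed.

Lemma sum_mup_prod (R : rcfType) n (r : 'I_n -> R) (Q : pred R) :
  let p := \prod_(j < n) ('X - (r j)%:P) in
  (\sum_(x <- rootsR p | Q x) mup x p = #|[set j | Q (r j)]|)%N.
Proof.
move=> p.
have pE : p = \prod_(y <- [seq r j | j <- enum 'I_n]) ('X - y%:P).
  by rewrite big_map big_enum.
have pn0 : p != 0 by rewrite pE monic_neq0 // monic_prod_XsubC.
rewrite (eq_bigr (fun x => count_mem x [seq r j | j <- enum 'I_n])); last first.
  by move=> x _; rewrite pE mu_prod_XsubC.
rewrite sum_count_mem ?uniq_roots //.
  rewrite count_map cardE /enum_mem /= -size_filter.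
  congr size. rewrite -filter_predI. apply: eq_filter => j /=. rewrite !unfold_in /= ?inE ?andbT //. by rewrite -[RHS]/(j \in [set j0 | Q (r j0)]) inE.
move=> x /mapP [j _ ->].
have := roots_on_rootsR pn0 (r j); rewrite itv_boundlr /= => <-.
by rewrite pE root_prod_XsubC map_f // mem_enum.
Qed.

Section Forms.
Variable R : rcfType.
Local Notation C := (R[i]).
Local Notation phi := (real_complex R).

Definition qf n (A : 'M[R]_n) (u : 'rV[R]_n) := \sum_i \sum_j u 0 i * A i j * u 0 j.
Definition nm n (u : 'rV[R]_n) := \sum_i u 0 i ^+ 2.
Definition nr (z : C) : R := complex.Re z ^+ 2 + complex.Im z ^+ 2.
Definition hf n (M : 'M[C]_n) (x : 'rV[C]_n) := \sum_i \sum_j x 0 i * M i j * conjC (x 0 j).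
Definition mRe m n (x : 'M[C]_(m, n)) := map_mx (@complex.Re R) x.
Definition mIm m n (x : 'M[C]_(m, n)) := map_mx (@complex.Im R) x.

Lemma ReD (a b : C) : complex.Re (a + b) = complex.Re a + complex.Re b.
Proof. by case: a; case: b. Qed.
Lemma ImD (a b : C) : complex.Im (a + b) = complex.Im a + complex.Im b.
Proof. by case: a; case: b. Qed.
Lemma ReMr (a : C) k : complex.Re (a * phi k) = complex.Re a * k.
Proof. by case: a => a b /=; rewrite mulr0 subr0. Qed.
Lemma ImMr (a : C) k : complex.Im (a * phi k) = complex.Im a * k.
Proof. by case: a => a b /=; rewrite mulr0 add0r. Qed.
Lemma Re_sum I (s : seq I) (F : I -> C) :
  complex.Re (\sum_(i <- s) F i) = \sum_(i <- s) complex.Re (F i).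
Proof. by elim: s => [|a s IH]; rewrite ?big_nil ?big_cons ?ReD ?IH. Qed.
Lemma Im_sum I (s : seq I) (F : I -> C) :
  complex.Im (\sum_(i <- s) F i) = \sum_(i <- s) complex.Im (F i).
Proof. by elim: s => [|a s IH]; rewrite ?big_nil ?big_cons ?ImD ?IH. Qed.

Lemma mRe_mul m n p (z : 'M[C]_(m, n)) (W : 'M[R]_(n, p)) :
  mRe (z *m map_mx phi W) = mRe z *m W.
Proof.
apply/matrixP => i j; rewrite !mxE Re_sum; apply: eq_bigr => k _.
by rewrite !mxE ReMr.
Qed.
Lemma mIm_mul m n p (z : 'M[C]_(m, n)) (W : 'M[R]_(n, p)) :
  mIm (z *m map_mx phi W) = mIm z *m W.
Proof.
apply/matrixP => i j; rewrite !mxE Im_sum; apply: eq_bigr => k _.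
by rewrite !mxE ImMr.
Qed.

Lemma mReIm m n (x : 'M[C]_(m, n)) :
  x = map_mx phi (mRe x) + 'i%C *: map_mx phi (mIm x).
Proof. by apply/matrixP => i j; rewrite !mxE [LHS]complexE. Qed.

Lemma mReIm_eq0 m n (x : 'M[C]_(m, n)) : (x == 0) = (mRe x == 0) && (mIm x == 0).
Proof.
apply/idP/idP => [/eqP -> | /andP [/eqP a /eqP b]].
  by apply/andP; split; apply/eqP/matrixP => i j; rewrite !mxE.
by rewrite [x]mReIm a b !map_mx0 scaler0 addr0.
Qed.

Lemma mul_conj (z : C) : z * conjC z = phi (nr z).
Proof.
case: z => a b; rewrite /nr /=; simpc; rewrite [b * a]mulrC addNr -!expr2.
by [].
Qed.


Lemma term_id (xi xj : C) m : xi * phi m * conjC xj =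
  phi (complex.Re xi * m * complex.Re xj + complex.Im xi * m * complex.Im xj) +
  'i%C * phi (complex.Im xi * m * complex.Re xj - complex.Re xi * m * complex.Im xj).
Proof.
case: xi => a b; case: xj => c d /=; simpc.
by f_equal; ring.
Qed.
Lemma hf_split n (B : 'M[R]_n) (x : 'rV[C]_n) : B^T = B ->
  hf (map_mx phi B) x = phi (qf B (mRe x) + qf B (mIm x)).
Proof.
move=> symB.
pose Re := @complex.Re R; pose Im := @complex.Im R.
transitivity (phi (\sum_i \sum_j (Re (x 0 i) * B i j * Re (x 0 j) + Im (x 0 i) * B i j * Im (x 0 j)))
   + 'i%C * phi (\sum_i \sum_j (Im (x 0 i) * B i j * Re (x 0 j) - Re (x 0 i) * B i j * Im (x 0 j)))).
  rewrite !rmorph_sum mulr_sumr -big_split; apply: eq_bigr => i _.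
  rewrite !rmorph_sum mulr_sumr -big_split; apply: eq_bigr => j _.
  by rewrite mxE term_id.
have -> : \sum_i \sum_j (Im (x 0 i) * B i j * Re (x 0 j) - Re (x 0 i) * B i j * Im (x 0 j)) = 0.
  under eq_bigr do rewrite sumrB.
  rewrite sumrB; apply/eqP; rewrite subr_eq0; apply/eqP; rewrite exchange_big /=; apply: eq_bigr => i _; apply: eq_bigr => j _.
  have -> : B j i = B i j by rewrite -{1}symB mxE.
  ring.
rewrite rmorph0 mulr0 addr0; congr phi.
rewrite /qf -big_split; apply: eq_bigr => i _; rewrite -big_split; apply: eq_bigr => j _.
by rewrite !mxE.
Qed.
Lemma hf_mx n (M : 'M[C]_n) x : hf M x = (x *m M *m x ^t conjC) 0 0.
Proof.
rewrite /hf mxE exchange_big /=; apply: eq_bigr => j _.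
by rewrite mxE mulr_suml; apply: eq_bigr => i _; rewrite !mxE.
Qed.

Lemma hf_diag n (d : 'rV[C]_n) y : hf (diag_mx d) y = \sum_j y 0 j * d 0 j * conjC (y 0 j).
Proof.
rewrite /hf; apply: eq_bigr => i _.
rewrite (bigD1 i) //= big1 ?addr0; first by rewrite mxE eqxx mulr1n.
by move=> j /negbTE ji; rewrite mxE eq_sym ji mulr0n mulr0 mul0r.
Qed.

Lemma hf_unitary n (U M : 'M[C]_n) x : U \is unitarymx ->
  hf (invmx U *m M *m U) x = hf M (x *m U ^t conjC).
Proof.
move=> Uu; rewrite !hf_mx invmx_unitary //.
congr (_ 0 0); rewrite !trmx_mul !map_mxM trmxCK !mulmxA.
by [].
Qed.

End Forms.

Section Spec.
Variable R : rcfType.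
Local Notation C := (R[i]).
Local Notation phi := (real_complex R).
Variable n : nat.
Variable A : 'M[R]_n.
Hypothesis symA : A^T = A.

Definition Ac := map_mx phi A.

Lemma herm_Ac : Ac \is hermsymmx.
Proof.
apply/is_hermitianmxP; rewrite expr0 scale1r; apply/matrixP => i j.
rewrite !mxE /=.
have -> : A i j = A j i by rewrite -{1}symA mxE.
exact: (esym (conjc_real _)).
Qed.

Definition Um := spectralmx Ac.
Definition dv := spectral_diag Ac.
Definition rv (j : 'I_n) : R := complex.Re (dv 0 j).

Lemma Um_unitary : Um \is unitarymx.
Proof. exact: spectral_unitarymx. Qed.

Lemma Ac_spec : Ac = invmx Um *m diag_mx dv *m Um.
Proof. by apply/orthomx_spectralP; apply: hermitian_normalmx; exact: herm_Ac. Qed.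

Lemma dv_real j : dv 0 j = phi (rv j).
Proof.
rewrite /rv RRe_real //.
by have /mxOverP := hermitian_spectral_diag_real herm_Ac; apply.
Qed.

Lemma char_poly_A : char_poly A = \prod_(j < n) ('X - (rv j)%:P).
Proof.
apply: (@map_poly_inj _ _ phi).
rewrite map_char_poly -/Ac Ac_spec char_poly_simil; last exact: spectral_unit.
rewrite char_poly_trig ?diag_mx_is_trig // rmorph_prod /=.
by apply: eq_bigr => j _; rewrite mxE eqxx mulr1n dv_real map_polyXsubC.
Qed.

Lemma hfA (x : 'rV[C]_n) : hf Ac x = phi (\sum_j rv j * nr ((x *m Um ^t conjC) 0 j)).
Proof.
rewrite Ac_spec hf_unitary ?Um_unitary // hf_diag rmorph_sum; apply: eq_bigr => j _.
by rewrite dv_real mulrAC mul_conj -rmorphM mulrC.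
Qed.

Lemma hf1 (x : 'rV[C]_n) : hf 1%:M x = phi (\sum_j nr ((x *m Um ^t conjC) 0 j)).
Proof.
have -> : (1%:M : 'M[C]_n) = invmx Um *m diag_mx (const_mx 1) *m Um.
  by rewrite diag_const_mx mulmx1 mulVmx // spectral_unit.
rewrite hf_unitary ?Um_unitary // hf_diag rmorph_sum; apply: eq_bigr => j _.
by rewrite [const_mx 1 0 j]mxE mulr1 mul_conj.
Qed.


Lemma nr_ge0 (z : C) : 0 <= nr z.
Proof. by rewrite /nr addr_ge0 // sqr_ge0. Qed.

Lemma nr_eq0 (z : C) : (nr z == 0) = (z == 0).
Proof.
case: z => a b; rewrite /nr /= paddr_eq0 ?sqr_ge0 // !sqrf_eq0.
by rewrite eq_complex.
Qed.

Lemma qf1 (u : 'rV[R]_n) : qf 1%:M u = nm u.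
Proof.
rewrite /qf /nm; apply: eq_bigr => i _.
rewrite (bigD1 i) //= big1 ?addr0; first by rewrite mxE eqxx mulr1 expr2.
by move=> j /negbTE ji; rewrite mxE eq_sym ji mulr0 mul0r.
Qed.

Lemma hf1_split (x : 'rV[C]_n) : hf 1%:M x = phi (nm (mRe x) + nm (mIm x)).
Proof.
have -> : (1%:M : 'M[C]_n) = map_mx phi 1%:M by rewrite map_mx1.
by rewrite hf_split ?trmx1 // !qf1.
Qed.

Lemma qf0 : qf A 0 = 0.
Proof. by rewrite /qf big1 // => i _; rewrite big1 // => j _; rewrite mxE !mul0r. Qed.

Lemma nm0 : nm (0 : 'rV[R]_n) = 0.
Proof. by rewrite /nm big1 // => i _; rewrite mxE expr2 mul0r. Qed.

Lemma rowv_neq0 (F : nzRingType) m (v : 'rV[F]_m) : v != 0 -> exists j, v 0 j != 0.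
Proof.
move=> vn0; apply/existsP; apply: contraT; rewrite negb_exists => /forallP H.
suff v0 : v = 0 by rewrite v0 eqxx in vn0.
apply/matrixP => i j; rewrite ord1 mxE.
by apply/eqP; rewrite -[_ == _]negbK H.
Qed.

Definition sel (S : {set 'I_n}) : 'M[C]_(n, #|S|) := \matrix_(i, l) ((i == enum_val l)%:R).

Lemma sel_mul (S : {set 'I_n}) (y : 'rV[C]_n) l : (y *m sel S) 0 l = y 0 (enum_val l).
Proof.
rewrite mxE (bigD1 (enum_val l)) //= mxE eqxx mulr1 big1 ?addr0 //.
by move=> i /negbTE il; rewrite mxE il mulr0.
Qed.

Lemma forms_eq (x : 'rV[C]_n) :
  \sum_j rv j * nr ((x *m Um ^t conjC) 0 j) = qf A (mRe x) + qf A (mIm x) /\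
  \sum_j nr ((x *m Um ^t conjC) 0 j) = nm (mRe x) + nm (mIm x).
Proof.
split; apply: (@complexI R).
  by rewrite -[LHS]/(phi _) -hfA -hf_split.
by rewrite -[LHS]/(phi _) -hf1 hf1_split.
Qed.

Lemma CF_span k (W : 'M[R]_(k, n)) c : row_free W ->
  (forall z : 'rV[R]_k, qf A (z *m W) <= c * nm (z *m W)) ->
  (k <= #|[set j | (rv j <= c)%R]|)%N.
Proof.
move=> rfW H; set S := [set j | rv j <= c].
rewrite leqNgt; apply/negP => ltSk.
pose B := map_mx phi W *m Um ^t conjC *m sel S.
have nrf : ~~ row_free B.
  by rewrite /row_free; move: (rank_leq_col B); apply: contraTN => /eqP ->; rewrite -ltnNge.
have [z zn0 zB] := not_row_free_ker nrf.
set x := z *m map_mx phi W.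
set y := x *m Um ^t conjC.
have yS : forall j, j \in S -> y 0 j = 0.
  move=> j jS; rewrite -(enum_rankK_in jS jS) -sel_mul.
  have -> : y *m sel S = z *m B by rewrite /y /x /B !mulmxA.
  by rewrite zB mxE.
have xn0 : x != 0 by rewrite /x mulmx_free_eq0 // /row_free mxrank_map.
have yn0 : y != 0.
  apply: contraNneq xn0 => y0.
  by rewrite -(mulmxKtV x Um_unitary (erefl n)) -/y y0 mul0mx.
have [j0 yj0] := rowv_neq0 yn0.
have j0S : j0 \notin S by apply: contra yj0 => /yS ->.
have [E1 E2] := forms_eq x.
have Hr := H (mRe z); have Hi := H (mIm z).
rewrite -mRe_mul -/x in Hr; rewrite -mIm_mul -/x in Hi.
have : \sum_j rv j * nr (y 0 j) <= c * \sum_j nr (y 0 j).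
  by rewrite E1 E2 mulrDr; apply: lerD.
apply/negP; rewrite -ltNge -subr_gt0 mulr_sumr -sumrB (bigD1 j0) //=.
have t0 : 0 < rv j0 * nr (y 0 j0) - c * nr (y 0 j0).
  rewrite -mulrBl mulr_gt0 //; last by rewrite lt0r nr_eq0 yj0 nr_ge0.
  by rewrite subr_gt0; move: j0S; rewrite inE -ltNge.
have t1 : 0 <= \sum_(j | j != j0) (rv j * nr (y 0 j) - c * nr (y 0 j)).
  apply: sumr_ge0 => j _; rewrite -mulrBl.
  case: (boolP (j \in S)) => jS; first by rewrite yS // /nr /= expr2 mul0r addr0 mulr0.
  by rewrite mulr_ge0 ?nr_ge0 // subr_ge0; move: jS; rewrite inE -ltNge => /ltW.
lra.
Qed.

Lemma CF_ker p (K : 'M[R]_(n, p)) c :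
  (forall u : 'rV[R]_n, u *m K = 0 -> u != 0 -> c * nm u < qf A u) ->
  (#|[set j | (rv j <= c)%R]| <= p)%N.
Proof.
move=> H; set S := [set j | rv j <= c].
rewrite leqNgt; apply/negP => ltpS.
pose B := (sel S)^T *m Um *m map_mx phi K.
have nrf : ~~ row_free B.
  by rewrite /row_free; move: (rank_leq_col B); apply: contraTN => /eqP ->; rewrite -ltnNge.
have [w wn0 wB] := not_row_free_ker nrf.
set y := w *m (sel S)^T.
set x := y *m Um.
have xy : x *m Um ^t conjC = y by rewrite /x mulmxtVK // Um_unitary.
have yS : forall j, j \notin S -> y 0 j = 0.
  move=> j jS; rewrite /y mxE big1 // => l _; rewrite !mxE.
  case: eqP => [ej|]; last by rewrite mulr0.
  by move: jS; rewrite ej enum_valP.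
have [l wl] := rowv_neq0 wn0.
have yl : y 0 (enum_val l) = w 0 l.
  rewrite /y mxE (bigD1 l) //= !mxE eqxx mulr1 big1 ?addr0 // => l' ll'.
  rewrite !mxE; case: eqP => [/enum_val_inj E|]; last by rewrite mulr0.
  by rewrite E eqxx in ll'.
have xK : x *m map_mx phi K = 0.
  by have -> : x *m map_mx phi K = w *m B by rewrite /x /y /B !mulmxA.
have xr : mRe x *m K = 0 by rewrite -mRe_mul xK; apply/matrixP => i j; rewrite !mxE.
have xi : mIm x *m K = 0 by rewrite -mIm_mul xK; apply/matrixP => i j; rewrite !mxE.
have xn0 : x != 0.
  apply: contra wl => /eqP x0; rewrite -yl -xy x0 mul0mx mxE.
  by [].
have [E1 E2] := forms_eq x.
rewrite xy in E1 E2.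
have Hw u : u *m K = 0 -> c * nm u <= qf A u.
  move=> uK; case: (eqVneq u 0) => [->|un0]; first by rewrite qf0 nm0 mulr0.
  by apply/ltW/H.
have Hs : c * (nm (mRe x) + nm (mIm x)) < qf A (mRe x) + qf A (mIm x).
  move: xn0; rewrite mReIm_eq0 negb_and => /orP [] nz; rewrite mulrDr.
    by apply: ltr_leD; [apply: H | apply: Hw].
  by apply: ler_ltD; [apply: Hw | apply: H].
move: Hs; rewrite -E1 -E2; apply/negP; rewrite -leNgt -subr_ge0 mulr_sumr -sumrB.
apply: sumr_ge0 => j _; rewrite -mulrBl.
case: (boolP (j \in S)) => jS; last by rewrite yS // /nr /= expr2 mul0r addr0 mulr0.
by rewrite mulr_ge0 ?nr_ge0 // subr_ge0; move: jS; rewrite inE.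
Qed.

Lemma rv_ge0 : (forall u, 0 <= qf A u) -> forall j, 0 <= rv j.
Proof.
move=> H j.
set x := (delta_mx 0 j : 'rV[C]_n) *m Um.
have [E1 _] := forms_eq x.
have xy : x *m Um ^t conjC = delta_mx 0 j by rewrite /x mulmxtVK // Um_unitary.
rewrite xy (bigD1 j) //= big1 in E1; last first.
  move=> i /negbTE ij; rewrite mxE ij andbF /nr /= expr2 mul0r addr0 mulr0.
  by [].
rewrite mxE !eqxx /nr /= expr1n [0 ^+ 2]expr2 mul0r !addr0 mulr1 in E1.
by rewrite E1 addr_ge0.
Qed.

End Spec.

Section Graph.
Variable R : rcfType.
Variable T : finType.
Variable e : rel T.
Hypothesis sg : simple_graph e.
Local Notation n := #|T|.

Definition hh (s t : T) := (s != t) && ~~ e s t.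
Definition Nf (f : T -> R) := \sum_t f t ^+ 2.
Definition Sf (f : T -> R) := \sum_t f t.
Definition Hf (f : T -> R) := \sum_s \sum_t (hh s t)%:R * (f s - f t) ^+ 2.
Definition Ef (f : T -> R) := \sum_s \sum_t (e s t)%:R * (f s - f t) ^+ 2.
Definition fv (u : 'rV[R]_n) (t : T) := u 0 (enum_rank t).

Lemma sum_ordT (F : 'I_n -> R) : \sum_(i < n) F i = \sum_t F (enum_rank t).
Proof.
rewrite (reindex (@enum_rank T)) //; exists enum_val => t _; [exact: enum_rankK | exact: enum_valK].
Qed.

Lemma symL : (laplacian R e)^T = laplacian R e.
Proof.
have [sym irr] := sg.
apply/matrixP => i j; rewrite !mxE eq_sym sym.
case: eqP => [->|]; by rewrite ?mulr0 ?mul0r.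
Qed.

Lemma deg_sum s : (deg e s)%:R = \sum_t (e s t)%:R :> R.
Proof.
rewrite /deg -sum1_card natr_sum big_mkcond /=; apply: eq_bigr => t _.
by rewrite inE; case: (e s t).
Qed.

Lemma qf_lap (u : 'rV[R]_n) : 2 * qf (laplacian R e) u = Ef (fv u).
Proof.
have [sym irr] := sg.
rewrite /qf sum_ordT.
under eq_bigr do rewrite sum_ordT.
rewrite /Ef /fv.
set f := fun t => u 0 (enum_rank t).
have E1 : \sum_s \sum_t u 0 (enum_rank s) * laplacian R e (enum_rank s) (enum_rank t) * u 0 (enum_rank t)
   = \sum_s (deg e s)%:R * f s ^+ 2 - \sum_s \sum_t (e s t)%:R * (f s * f t).
  rewrite -sumrB; apply: eq_bigr => s _.
  rewrite (bigD1 s) //= [in RHS](bigD1 s) //= !mxE !enum_rankK eqxx irr /=.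
  rewrite mul1r subr0 mul0r add0r -sumrN; congr (_ + _).
    by rewrite /f; ring.
  apply: eq_bigr => t ts; rewrite !mxE !enum_rankK.
  rewrite (inj_eq (@enum_rank_inj T)) eq_sym (negbTE ts) mul0r sub0r /f; ring.
rewrite E1.
have E2 : \sum_s \sum_t (e s t)%:R * (f s - f t) ^+ 2 =
   \sum_s \sum_t (e s t)%:R * f s ^+ 2 + \sum_s \sum_t (e s t)%:R * f t ^+ 2
   - 2 * \sum_s \sum_t (e s t)%:R * (f s * f t).
  rewrite mulr_sumr -!big_split -sumrB /=; apply: eq_bigr => s _.
  rewrite mulr_sumr -!big_split -sumrB /=; apply: eq_bigr => t _; ring.
rewrite E2 [X in _ + X - _]exchange_big /=.
have E3 : forall s, \sum_t (e s t)%:R * f s ^+ 2 = (deg e s)%:R * f s ^+ 2.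
  by move=> s; rewrite deg_sum mulr_suml.
have E4 : forall s, \sum_t (e t s)%:R * f s ^+ 2 = (deg e s)%:R * f s ^+ 2.
  by move=> s; rewrite deg_sum mulr_suml; apply: eq_bigr => t _; rewrite sym.
have -> : \sum_s \sum_t (e s t)%:R * f s ^+ 2 = \sum_s (deg e s)%:R * f s ^+ 2.
  by apply: eq_bigr => s _; apply: E3.
have -> : \sum_j \sum_i (e i j)%:R * f j ^+ 2 = \sum_s (deg e s)%:R * f s ^+ 2.
  by apply: eq_bigr => s _; apply: E4.
ring.
Qed.


Lemma Ef_comp f : Ef f = 2 * n%:R * Nf f - 2 * Sf f ^+ 2 - Hf f.
Proof.
have [sym irr] := sg.
have E1 : Ef f = \sum_(s : T) \sum_(t : T) (f s - f t) ^+ 2 - Hf f.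
  rewrite /Ef /Hf -sumrB; apply: eq_bigr => s _; rewrite -sumrB; apply: eq_bigr => t _.
  rewrite /hh; case: (eqVneq s t) => [->|st] /=; first by rewrite irr subrr expr0n /= !mulr0 subr0.
  by case: (e s t) => /=; ring.
rewrite E1; congr (_ - _).
have E2 : \sum_(s : T) \sum_(t : T) (f s - f t) ^+ 2 =
   \sum_(s : T) \sum_(t : T) f s ^+ 2 + \sum_(s : T) \sum_(t : T) f t ^+ 2
   - 2 * \sum_(s : T) \sum_(t : T) f s * f t.
  rewrite mulr_sumr -!big_split -sumrB /=; apply: eq_bigr => s _.
  rewrite mulr_sumr -!big_split -sumrB /=; apply: eq_bigr => t _; ring.
rewrite E2 /Nf /Sf.
have -> : \sum_(s : T) \sum_(t : T) f s * f t = (\sum_(s : T) f s) * (\sum_(t : T) f t).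
  by rewrite mulr_suml; apply: eq_bigr => s _; rewrite mulr_sumr.
have -> : \sum_(s : T) \sum_(t : T) f s ^+ 2 = n%:R * \sum_s f s ^+ 2.
  by rewrite mulr_sumr; apply: eq_bigr => s _; rewrite sumr_const mulr_natl.
have -> : \sum_(s : T) \sum_(t : T) f t ^+ 2 = n%:R * \sum_s f s ^+ 2.
  by rewrite sumr_const mulr_natl.
ring.
Qed.

Lemma Ef_ge0 f : 0 <= Ef f.
Proof. by apply: sumr_ge0 => s _; apply: sumr_ge0 => t _; rewrite mulr_ge0 ?ler0n ?sqr_ge0. Qed.

Lemma nm_fv u : nm u = Nf (fv u).
Proof. by rewrite /nm sum_ordT. Qed.

Lemma eq_Nf f g : f =1 g -> Nf f = Nf g.
Proof. by move=> fg; apply: eq_bigr => t _; rewrite fg. Qed.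
Lemma eq_Sf f g : f =1 g -> Sf f = Sf g.
Proof. by move=> fg; apply: eq_bigr => t _; rewrite fg. Qed.
Lemma eq_Hf f g : f =1 g -> Hf f = Hf g.
Proof. by move=> fg; apply: eq_bigr => s _; apply: eq_bigr => t _; rewrite !fg. Qed.

Lemma qf_L_ge0 u : 0 <= qf (laplacian R e) u.
Proof.
have := Ef_ge0 (fv u); rewrite -qf_lap.
by rewrite pmulr_rge0 // ltr0n.
Qed.

Lemma cnt_lower k (w : 'I_k -> T -> R) : (2 <= n)%N ->
  (forall z : 'rV[R]_k, (forall t, \sum_l z 0 l * w l t = 0) -> z = 0) ->
  (forall z : 'rV[R]_k, 4 * Nf (fun t => \sum_l z 0 l * w l t) <=
       2 * Sf (fun t => \sum_l z 0 l * w l t) ^+ 2 + Hf (fun t => \sum_l z 0 l * w l t)) ->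
  (k <= #|[set j | (rv (laplacian R e) j <= (n - 2)%N%:R)%R]|)%N.
Proof.
move=> n2 inj H.
pose W : 'M[R]_(k, n) := \matrix_(l, i) w l (enum_val i).
have zW : forall z : 'rV[R]_k, fv (z *m W) =1 (fun t => \sum_l z 0 l * w l t).
  by move=> z t; rewrite /fv mxE; apply: eq_bigr => l _; rewrite mxE enum_rankK.
apply: (CF_span symL (W := W)).
  apply: contraT => /not_row_free_ker [z zn0 zW0].
  suff z0 : z = 0 by rewrite z0 eqxx in zn0.
  by apply: inj => t; rewrite -zW zW0 /fv mxE.
move=> z.
have Hz := H z.
rewrite nm_fv (eq_Nf (zW z)) natrB // -(@ler_pM2l _ 2) //.
rewrite qf_lap Ef_comp (eq_Nf (zW z)) (eq_Sf (zW z)) (eq_Hf (zW z)).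
lra.
Qed.

Lemma cnt_upper a : (2 <= n)%N ->
  (forall f : T -> R, f a = 0 -> Sf f = 0 -> (exists t, f t != 0) ->
       2 * Sf f ^+ 2 + Hf f < 4 * Nf f) ->
  (#|[set j | (rv (laplacian R e) j <= (n - 2)%N%:R)%R]| <= 2)%N.
Proof.
move=> n2 H.
pose K : 'M[R]_(n, 2) := \matrix_(i, l) (if l == ord0 then (enum_val i == a)%:R else 1).
apply: (CF_ker symL (K := K)) => u uK un0.
have fa : fv u a = 0.
  have := congr1 (fun M : 'M[R]_(1, 2) => M 0 ord0) uK; rewrite mxE [RHS]mxE => <-.
  rewrite (bigD1 (enum_rank a)) //= mxE enum_rankK eqxx eqxx mulr1 big1 ?addr0 //.
  move=> i ia; rewrite mxE /=.
  have -> : (enum_val i == a) = false.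
    by apply/negP => /eqP ia'; move: ia; rewrite -ia' enum_valK eqxx.
  by rewrite mulr0.
have fS : Sf (fv u) = 0.
  have := congr1 (fun M : 'M[R]_(1, 2) => M 0 ord_max) uK; rewrite mxE [RHS]mxE => <-.
  rewrite /Sf /fv -sum_ordT; apply: eq_bigr => i _; rewrite mxE /= mulr1.
  by [].
have [i ui] := rowv_neq0 un0.
have ft : exists t, fv u t != 0 by exists (enum_val i); rewrite /fv enum_valK.
have Hu := H _ fa fS ft.
have Np : 0 < Nf (fv u).
  rewrite lt0r; apply/andP; split; last by apply: sumr_ge0 => t _; apply: sqr_ge0.
  apply: contraTneq Hu => ->; rewrite fS expr0n /= mulr0 add0r mulr0 -leNgt.
  by rewrite /Hf; apply: sumr_ge0 => s _; apply: sumr_ge0 => t _; rewrite mulr_ge0 ?ler0n ?sqr_ge0.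
rewrite nm_fv natrB // -(@ltr_pM2l _ 2) //.
rewrite qf_lap Ef_comp.
lra.
Qed.

Lemma NS3 z0 z1 z2 (g1 g2 : T -> R) : Sf g1 = 0 -> Sf g2 = 0 -> \sum_t g1 t * g2 t = 0 ->
  Nf (fun t => z0 + z1 * g1 t + z2 * g2 t) = n%:R * z0 ^+ 2 + z1 ^+ 2 * Nf g1 + z2 ^+ 2 * Nf g2 /\
  Sf (fun t => z0 + z1 * g1 t + z2 * g2 t) = n%:R * z0.
Proof.
move=> s1 s2 s12; split.
  rewrite /Nf (eq_bigr (fun t => z0 ^+ 2 + (2 * z0 * z1) * g1 t + (2 * z0 * z2) * g2 t
       + z1 ^+ 2 * g1 t ^+ 2 + z2 ^+ 2 * g2 t ^+ 2 + (2 * z1 * z2) * (g1 t * g2 t))); last first.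
    by move=> t _; ring.
  rewrite !big_split /= -!mulr_sumr sumr_const s12.
  move: s1 s2; rewrite /Sf => -> ->; rewrite mulr_natl; ring.
rewrite /Sf !big_split /= -!mulr_sumr sumr_const.
move: s1 s2; rewrite /Sf => -> ->; rewrite mulr_natl; ring.
Qed.

Local Notation cnt := #|[set j | (rv (laplacian R e) j <= (n - 2)%N%:R)%R]|.

Lemma cnt3 (g1 g2 : T -> R) : (2 <= n)%N ->
  Sf g1 = 0 -> Sf g2 = 0 -> \sum_t g1 t * g2 t = 0 ->
  (forall z0 z1 z2, (forall t, z0 + z1 * g1 t + z2 * g2 t = 0) -> [/\ z0 = 0, z1 = 0 & z2 = 0]) ->
  (forall z0 z1 z2, 4 * Nf g1 * z1 ^+ 2 + 4 * Nf g2 * z2 ^+ 2 <=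
       Hf (fun t => z0 + z1 * g1 t + z2 * g2 t)) ->
  (3 <= cnt)%N.
Proof.
move=> n2 s1 s2 s12 inj HH.
apply: (cnt_lower (w := fun l t => if val l == 0%N then 1 else if val l == 1%N then g1 t else g2 t)) => // z.
  have E : forall t, \sum_l z 0 l * (if val l == 0%N then 1 else if val l == 1%N then g1 t else g2 t)
     = z 0 ord0 + z 0 (lift ord0 ord0) * g1 t + z 0 (lift ord0 (lift ord0 ord0)) * g2 t.
    by move=> t; rewrite !big_ord_recl big_ord0 /=; ring.
  move=> H0; have [] := inj _ _ _ (fun t => etrans (esym (E t)) (H0 t)).
  move=> h0 h1 h2; apply/matrixP => i j; rewrite ord1 [RHS]mxE.
  case: j => [[|[|[|j]]] Hj] //.
  - by rewrite -h0; congr (z 0 _); apply: val_inj.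
  - by rewrite -h1; congr (z 0 _); apply: val_inj.
  - by rewrite -h2; congr (z 0 _); apply: val_inj.
set z0 := z 0 ord0; set z1 := z 0 (lift ord0 ord0); set z2 := z 0 (lift ord0 (lift ord0 ord0)).
have E : forall t, \sum_l z 0 l * (if val l == 0%N then 1 else if val l == 1%N then g1 t else g2 t)
     = z0 + z1 * g1 t + z2 * g2 t.
  by move=> t; rewrite !big_ord_recl big_ord0 /= /z0 /z1 /z2; ring.
rewrite (eq_Nf E) (eq_Sf E) (eq_Hf E).
have [-> ->] := NS3 z0 z1 z2 s1 s2 s12.
have := HH z0 z1 z2.
have n2' : 2 <= n%:R :> R by rewrite (ler_nat R 2).
have h : 0 <= (n%:R - 2) * n%:R * z0 ^+ 2 :> R.
  by rewrite mulr_ge0 ?sqr_ge0 // mulr_ge0 ?subr_ge0 // (le_trans _ n2').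
nra.
Qed.

Lemma cnt2 (g1 : T -> R) : (2 <= n)%N -> Sf g1 = 0 ->
  (forall z0 z1, (forall t, z0 + z1 * g1 t = 0) -> z0 = 0 /\ z1 = 0) ->
  (forall z0 z1, 4 * Nf g1 * z1 ^+ 2 <= Hf (fun t => z0 + z1 * g1 t)) ->
  (2 <= cnt)%N.
Proof.
move=> n2 s1 inj HH.
apply: (cnt_lower (w := fun l t => if val l == 0%N then 1 else g1 t)) => // z.
  have E : forall t, \sum_l z 0 l * (if val l == 0%N then 1 else g1 t)
     = z 0 ord0 + z 0 (lift ord0 ord0) * g1 t.
    by move=> t; rewrite !big_ord_recl big_ord0 /=; ring.
  move=> H0; have [] := inj _ _ (fun t => etrans (esym (E t)) (H0 t)).
  move=> h0 h1; apply/matrixP => i j; rewrite ord1 [RHS]mxE.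
  case: j => [[|[|j]] Hj] //.
  - by rewrite -h0; congr (z 0 _); apply: val_inj.
  - by rewrite -h1; congr (z 0 _); apply: val_inj.
set z0 := z 0 ord0; set z1 := z 0 (lift ord0 ord0).
have E : forall t, \sum_l z 0 l * (if val l == 0%N then 1 else g1 t)
     = z0 + z1 * g1 t + 0 * (fun _ => 0) t.
  by move=> t; rewrite !big_ord_recl big_ord0 /= /z0 /z1; ring.
rewrite (eq_Nf E) (eq_Sf E) (eq_Hf E).
have s2 : Sf (fun _ : T => 0 : R) = 0 by rewrite /Sf big1.
have s12 : \sum_t g1 t * (fun _ : T => 0 : R) t = 0 by rewrite big1 // => t _; rewrite mulr0.
have [-> ->] := NS3 z0 z1 0 s1 s2 s12.
have := HH z0 z1.
have -> : Hf (fun t => z0 + z1 * g1 t + 0 * (fun _ : T => 0 : R) t) = Hf (fun t => z0 + z1 * g1 t).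
  by apply: eq_Hf => t; rewrite mul0r addr0.
have n2' : 2 <= n%:R :> R by rewrite (ler_nat R 2).
have h : 0 <= (n%:R - 2) * n%:R * z0 ^+ 2 :> R.
  by rewrite mulr_ge0 ?sqr_ge0 // mulr_ge0 ?subr_ge0 // (le_trans _ n2').
nra.
Qed.

Definition dl (a t : T) : R := (t == a)%:R.

Lemma sum_dF a (F : T -> R) : \sum_t dl a t * F t = F a.
Proof.
rewrite (bigD1 a) //= /dl eqxx mul1r big1 ?addr0 // => t /negbTE ->.
by rewrite mul0r.
Qed.

Lemma sum_d a : \sum_t dl a t = 1.
Proof. by rewrite -[RHS](sum_dF a (fun _ => 1)); apply: eq_bigr => t _; rewrite mulr1. Qed.

Lemma Hf_ge (l : seq (T * T)) f : uniq l -> all (fun p => hh p.1 p.2) l ->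
  \sum_(p <- l) (f p.1 - f p.2) ^+ 2 <= Hf f.
Proof.
move=> ul hl; rewrite /Hf pair_bigA /= big_uniq //= big_mkcond /=.
apply: ler_sum => p _; case: ifP => pl.
  by have /allP /(_ p pl) -> := hl; rewrite mul1r.
by rewrite mulr_ge0 ?ler0n ?sqr_ge0.
Qed.

Lemma hh_sym s t : hh s t = hh t s.
Proof. by have [sym _] := sg; rewrite /hh eq_sym sym. Qed.

Lemma hh_neq s t : hh s t -> (s == t) = false.
Proof. by case/andP => /negbTE. Qed.

Lemma edge_cnt a b : hh a b -> (2 <= n)%N -> (2 <= cnt)%N.
Proof.
move=> hab n2.
have ab := hh_neq hab; have ba : (b == a) = false by rewrite eq_sym.
pose g1 t := dl a t - dl b t.
apply: (cnt2 (g1 := g1)) => //.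
- by rewrite /Sf /g1 sumrB !sum_d subrr.
- move=> z0 z1 H; have := H a; have := H b; rewrite /g1 /dl !eqxx ab ba /=.
  move=> h1 h2; split; lra.
- move=> z0 z1.
  have Ng : Nf g1 = 2.
    rewrite /Nf (eq_bigr (fun t => dl a t * g1 t - dl b t * g1 t)); last first.
      by move=> t _; rewrite /g1; ring.
    by rewrite sumrB !sum_dF /g1 /dl !eqxx ab ba /=; ring.
  rewrite Ng; set f := fun t => _.
  have H : \sum_(p <- [:: (a, b); (b, a)]) (f p.1 - f p.2) ^+ 2 <= Hf f.
    apply: Hf_ge; first by rewrite /= inE xpair_eqE ab.
    by rewrite /= hab hh_sym hab.
  rewrite !big_cons big_nil /f /g1 /dl /= !eqxx ab ba /= in H; nra.
Qed.

Lemma twoK2_cnt a b c d : hh a b -> hh c d -> a != c -> a != d -> b != c -> b != d ->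
  (2 <= n)%N -> (3 <= cnt)%N.
Proof.
move=> hab hcd /negbTE ac /negbTE ad /negbTE bc /negbTE bd n2.
have ab := hh_neq hab; have cd := hh_neq hcd.
have ba : (b == a) = false by rewrite eq_sym.
have dc : (d == c) = false by rewrite eq_sym.
have ca : (c == a) = false by rewrite eq_sym.
have da : (d == a) = false by rewrite eq_sym.
have cb : (c == b) = false by rewrite eq_sym.
have db : (d == b) = false by rewrite eq_sym.
pose g1 t := dl a t - dl b t.
pose g2 t := dl c t - dl d t.
have Sg1 : Sf g1 = 0 by rewrite /Sf /g1 sumrB !sum_d subrr.
have Sg2 : Sf g2 = 0 by rewrite /Sf /g2 sumrB !sum_d subrr.
have dot : forall h : T -> R, \sum_t g1 t * h t = h a - h b.
  move=> h; rewrite (eq_bigr (fun t => dl a t * h t - dl b t * h t)); last by move=> t _; rewrite /g1; ring.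
  by rewrite sumrB !sum_dF.
have dot2 : forall h : T -> R, \sum_t g2 t * h t = h c - h d.
  move=> h; rewrite (eq_bigr (fun t => dl c t * h t - dl d t * h t)); last by move=> t _; rewrite /g2; ring.
  by rewrite sumrB !sum_dF.
have N1 : Nf g1 = 2.
  rewrite /Nf (eq_bigr (fun t => g1 t * g1 t)); last by move=> t _; rewrite expr2.
  by rewrite dot /g1 /dl ?eqxx ?ab ?ba ?ac ?ca ?ad ?da ?bc ?cb ?bd ?db ?cd ?dc /=; ring.
have N2 : Nf g2 = 2.
  rewrite /Nf (eq_bigr (fun t => g2 t * g2 t)); last by move=> t _; rewrite expr2.
  by rewrite dot2 /g2 /dl ?eqxx ?ab ?ba ?ac ?ca ?ad ?da ?bc ?cb ?bd ?db ?cd ?dc /=; ring.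
apply: (cnt3 (g1 := g1) (g2 := g2)) => //.
- by rewrite dot /g2 /dl ?eqxx ?ab ?ba ?ac ?ca ?ad ?da ?bc ?cb ?bd ?db ?cd ?dc /=; ring.
- move=> z0 z1 z2 H; have := H a; have := H b; have := H c.
  rewrite /g1 /g2 /dl ?eqxx ?ab ?ba ?ac ?ca ?ad ?da ?bc ?cb ?bd ?db ?cd ?dc /=.
  move=> h1 h2 h3; split; lra.
- move=> z0 z1 z2; rewrite N1 N2; set f := fun t => _.
  have H : \sum_(p <- [:: (a, b); (b, a); (c, d); (d, c)]) (f p.1 - f p.2) ^+ 2 <= Hf f.
    apply: Hf_ge; first by rewrite /= !inE !xpair_eqE ?eqxx ?ab ?ba ?ac ?ca ?ad ?da ?bc ?cb ?bd ?db ?cd ?dc.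
    by rewrite /= hab hcd hh_sym hab hh_sym hcd.
  rewrite !big_cons big_nil /f /g1 /g2 /dl /= ?eqxx ?ab ?ba ?ac ?ca ?ad ?da ?bc ?cb ?bd ?db ?cd ?dc /= in H.
  nra.
Qed.

Lemma P4_cnt a b c d : hh a b -> hh b c -> hh c d -> a != c -> a != d -> b != d ->
  (2 <= n)%N -> (3 <= cnt)%N.
Proof.
move=> hab hbc hcd /negbTE ac /negbTE ad /negbTE bd n2.
have ab := hh_neq hab; have bc := hh_neq hbc; have cd := hh_neq hcd.
have ba : (b == a) = false by rewrite eq_sym.
have dc : (d == c) = false by rewrite eq_sym.
have ca : (c == a) = false by rewrite eq_sym.
have da : (d == a) = false by rewrite eq_sym.
have cb : (c == b) = false by rewrite eq_sym.
have db : (d == b) = false by rewrite eq_sym.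
pose g1 t := dl a t - dl b t - dl c t + dl d t.
pose g2 t := dl a t - dl b t + dl c t - dl d t.
have Sg1 : Sf g1 = 0 by rewrite /Sf /g1 big_split /= !sumrB !sum_d; ring.
have Sg2 : Sf g2 = 0 by rewrite /Sf /g2 sumrB big_split /= sumrB !sum_d; ring.
have dot : forall h : T -> R, \sum_t g1 t * h t = h a - h b - h c + h d.
  move=> h; rewrite (eq_bigr (fun t => dl a t * h t - dl b t * h t - dl c t * h t + dl d t * h t)); last by move=> t _; rewrite /g1; ring.
  by rewrite big_split /= !sumrB !sum_dF.
have dot2 : forall h : T -> R, \sum_t g2 t * h t = h a - h b + h c - h d.
  move=> h; rewrite (eq_bigr (fun t => dl a t * h t - dl b t * h t + dl c t * h t - dl d t * h t)); last by move=> t _; rewrite /g2; ring.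
  by rewrite sumrB big_split /= sumrB !sum_dF.
have N1 : Nf g1 = 4.
  rewrite /Nf (eq_bigr (fun t => g1 t * g1 t)); last by move=> t _; rewrite expr2.
  by rewrite dot /g1 /dl ?eqxx ?ab ?ba ?ac ?ca ?ad ?da ?bc ?cb ?bd ?db ?cd ?dc /=; ring.
have N2 : Nf g2 = 4.
  rewrite /Nf (eq_bigr (fun t => g2 t * g2 t)); last by move=> t _; rewrite expr2.
  by rewrite dot2 /g2 /dl ?eqxx ?ab ?ba ?ac ?ca ?ad ?da ?bc ?cb ?bd ?db ?cd ?dc /=; ring.
apply: (cnt3 (g1 := g1) (g2 := g2)) => //.
- by rewrite dot /g2 /dl ?eqxx ?ab ?ba ?ac ?ca ?ad ?da ?bc ?cb ?bd ?db ?cd ?dc /=; ring.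
- move=> z0 z1 z2 H; have := H a; have := H b; have := H c; have := H d.
  rewrite /g1 /g2 /dl ?eqxx ?ab ?ba ?ac ?ca ?ad ?da ?bc ?cb ?bd ?db ?cd ?dc /=.
  move=> h1 h2 h3 h4; split; lra.
- move=> z0 z1 z2; rewrite N1 N2; set f := fun t => _.
  have H : \sum_(p <- [:: (a, b); (b, a); (b, c); (c, b); (c, d); (d, c)]) (f p.1 - f p.2) ^+ 2 <= Hf f.
    apply: Hf_ge; first by rewrite /= !inE !xpair_eqE ?eqxx ?ab ?ba ?ac ?ca ?ad ?da ?bc ?cb ?bd ?db ?cd ?dc.
    by rewrite /= hab hbc hcd hh_sym hab hh_sym hbc hh_sym hcd.
  rewrite !big_cons big_nil /f /g1 /g2 /dl /= ?eqxx ?ab ?ba ?ac ?ca ?ad ?da ?bc ?cb ?bd ?db ?cd ?dc /= in H.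
  nra.
Qed.

Lemma star_cnt a : (forall s t, hh s t -> s = a \/ t = a) -> (2 <= n)%N -> (cnt <= 2)%N.
Proof.
move=> star n2; apply: (cnt_upper (a := a)) => // f fa fS [t0 ft0].
have Hle : Hf f <= \sum_s \sum_t (dl a s + dl a t) * (f s - f t) ^+ 2.
  apply: ler_sum => s _; apply: ler_sum => t _; apply: ler_wpM2r; first exact: sqr_ge0.
  case hst: (hh s t) => /=; last by rewrite addr_ge0 // /dl ler0n.
  by case: (star s t hst) => ->; rewrite /dl eqxx; case: (_ == _); rewrite /= ?addr0 ?add0r ?lerDl.
have E : \sum_s \sum_t (dl a s + dl a t) * (f s - f t) ^+ 2 = 2 * Nf f.
  have E1 : \sum_(s : T) \sum_(t : T) dl a s * (f s - f t) ^+ 2 = Nf f.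
    rewrite (eq_bigr (fun s => dl a s * \sum_t (f s - f t) ^+ 2)); last by move=> s _; rewrite mulr_sumr.
    by rewrite (sum_dF a (fun s => \sum_t (f s - f t) ^+ 2)) fa; apply: eq_bigr => t _; rewrite sub0r sqrrN.
  have E2 : \sum_(s : T) \sum_(t : T) dl a t * (f s - f t) ^+ 2 = Nf f.
    rewrite exchange_big /=.
    rewrite (eq_bigr (fun t => dl a t * \sum_s (f s - f t) ^+ 2)); last by move=> t _; rewrite mulr_sumr.
    by rewrite (sum_dF a (fun t => \sum_s (f s - f t) ^+ 2)) fa; apply: eq_bigr => t _; rewrite subr0.
  rewrite (eq_bigr (fun s => \sum_t dl a s * (f s - f t) ^+ 2 + \sum_t dl a t * (f s - f t) ^+ 2)).
    by rewrite big_split /= E1 E2; ring.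
  by move=> s _; rewrite -big_split; apply: eq_bigr => t _; rewrite mulrDl.
have Np : 0 < Nf f.
  rewrite /Nf (bigD1 t0) //=.
  have h1 : 0 < f t0 ^+ 2 by rewrite lt0r sqrf_eq0 ft0 sqr_ge0.
  have h2 : 0 <= \sum_(t | t != t0) f t ^+ 2 by apply: sumr_ge0 => t _; rewrite sqr_ge0.
  lra.
rewrite fS expr0n /= mulr0 add0r; lra.
Qed.

Lemma mG_cnt (c : R) : mG_closed e 0 c = #|[set j | (rv (laplacian R e) j <= c)%R]|.
Proof.
rewrite /mG_closed /= (char_poly_A symL).
rewrite (sum_mup_prod (rv (laplacian R e)) (fun x => (0 <= x) && (x <= c))).
apply: eq_card => j; rewrite !inE.
by rewrite (rv_ge0 symL qf_L_ge0).
Qed.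

Lemma iso_of_star c x0 : hh c x0 -> (forall s t, hh s t -> s = c \/ t = c) ->
  exists m : nat, (2 <= m <= n)%N /\ isomorphic e (K1_KK n m).
Proof.
move=> hcx star.
have [sym irr] := sg.
set S := [set t | hh c t].
set B := [set t | (t != c) && ~~ hh c t].
set l := c :: (enum B ++ enum S).
have hcc : hh c c = false by rewrite /hh eqxx.
have cB : c \notin B by rewrite inE eqxx.
have cS : c \notin S by rewrite inE hcc.
have ul : uniq l.
  rewrite /= mem_cat !mem_enum negb_or cB cS cat_uniq !enum_uniq /= andbT.
  apply/hasPn => t; rewrite !mem_enum !inE => hct; by rewrite hct andbF.
have lall : forall t, t \in l.
  move=> t; rewrite inE mem_cat !mem_enum !inE.
  by case: (t == c); case: (hh c t); rewrite ?orbT.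
have size_l : size l = n.
  rewrite -(card_uniqP ul) cardT; apply: eq_cardT => t.
  by rewrite lall.
have size_l' : n = (#|B| + #|S|).+1 by rewrite -size_l /= size_cat -!cardE.
have idx_lt : forall t, (index t l < n)%N by move=> t; rewrite -size_l index_mem lall.
pose f t := Ordinal (idx_lt t).
have finj : injective f.
  move=> x y H0; have H : index x l = index y l := congr1 val H0.
  exact: (index_inj c (lall x) (lall y) H).
exists (#|S|.+1); split.
  rewrite ltnS lt0n; apply/andP; split.
    by apply/eqP => S0; have := card0_eq S0 x0; rewrite inE hcx.
  by rewrite size_l' ltnS leq_addl.
exists f; split; first by apply: inj_card_bij finj _; rewrite card_ord.
have nm : (n - #|S|.+1 = #|B|)%N by rewrite size_l' subSS addnK.
have bf : forall t, block (#|S|.+1) (f t) = (if t == c then 0 else if t \in S then 2 else 1)%N.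
  move=> t; rewrite /block /= nm.
  case: (t =P c) => [->|/eqP tc]; first by rewrite eqxx.
  rewrite /= (eq_sym c t) (negbTE tc) index_cat !mem_enum /=.
  case tS: (t \in S).
    have tB : t \in B = false by move: tS; rewrite !inE => ->; rewrite andbF.
    by rewrite tB -cardE ltnNge leq_addr.
  have tB : t \in B by move: tS; rewrite !inE tc => ->.
  by rewrite tB cardE index_mem mem_enum tB.
move=> x y; rewrite /K1_KK !bf (inj_eq finj).
case: (eqVneq x y) => [<-|xy]; first by rewrite irr.
have -> : e x y = ~~ hh x y by rewrite /hh xy /= negbK.
have hhE : hh x y = ((x == c) && (y \in S)) || ((y == c) && (x \in S)).
  apply/idP/idP.
    move=> hxy; case: (star x y hxy) => [xc | yc]; subst.
      by rewrite eqxx !inE hxy.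
    by rewrite eqxx !inE [hh c x]hh_sym hxy !orbT.
  case/orP => /andP [/eqP -> ]; rewrite inE //.
  by rewrite hh_sym.
rewrite hhE.
case: (x =P c) => [xc|/eqP xc]; case: (y =P c) => [yc|/eqP yc].
- by rewrite xc yc eqxx in xy.
- by case: (y \in S).
- by case: (x \in S).
- by case: (x \in S); case: (y \in S).
Qed.

Lemma indep_of (S : {set T}) : (forall u v, u \in S -> v \in S -> u != v -> hh u v) ->
  independent e S.
Proof.
have [sym irr] := sg.
move=> H; apply/forallP => u; apply/implyP => uS; apply/forallP => v; apply/implyP => vS.
case: (eqVneq u v) => [<-|uv]; first by rewrite irr.
by have /andP [] := H u v uS vS uv.
Qed.

Lemma alpha_edge : alpha e = 2%N -> exists a b, hh a b.
Proof.
have [sym irr] := sg.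
move=> a2.
have ne : (0 < #|[pred S : {set T} | independent e S]|)%N.
  apply/card_gt0P; exists set0; rewrite inE.
  by apply: indep_of => u v; rewrite inE.
case: (eq_bigmax_cond (fun S : {set T} => #|S|) ne) => S0 S0ind hmax.
have c2 : #|S0| = 2%N by rewrite -hmax -a2.
have /cards2P [x [y [xy S0E]]] : #|S0| == 2%N by rewrite c2.
exists x, y; rewrite /hh xy /=.
move: S0ind; rewrite S0E inE => /forallP /(_ x) /implyP.
rewrite !inE eqxx => /(_ isT) /forallP /(_ y) /implyP.
by rewrite !inE eqxx orbT => /(_ isT).
Qed.

Lemma alpha_tri : alpha e = 2%N -> forall x y z, hh x y -> hh y z -> hh x z -> False.
Proof.
move=> a2 x y z hxy hyz hxz.
have xy := hh_neq hxy; have yz := hh_neq hyz; have xz := hh_neq hxz.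
set S := x |: [set y; z].
have ind : independent e S.
  apply: indep_of => u v; rewrite !inE => /or3P [] /eqP -> /or3P [] /eqP ->;
  rewrite ?eqxx // => _; by rewrite ?hxy ?hyz ?hxz // hh_sym ?hxy ?hyz ?hxz.
have c3 : #|S| = 3%N by rewrite cardsU1 cards2 !inE xy xz yz.
have := @leq_bigmax_cond _ (fun S => independent e S) (fun S : {set T} => #|S|) S ind.
by rewrite -/(alpha e) a2 c3.
Qed.

Lemma center a b : hh a b ->
  (forall x y z, hh x y -> hh y z -> hh x z -> False) ->
  (forall a b c d, hh a b -> hh c d -> a != c -> a != d -> b != c -> b != d -> False) ->
  (forall a b c d, hh a b -> hh b c -> hh c d -> a != c -> a != d -> b != d -> False) ->
  exists c x0, hh c x0 /\ (forall s t, hh s t -> s = c \/ t = c).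
Proof.
move=> hab tri no2K2 noP4.
have meet : forall s t, hh s t -> [|| s == a, s == b, t == a | t == b].
  move=> s t hst; apply: contraT; rewrite !negb_or => /and4P [sa sb ta tb].
  by exfalso; apply: (no2K2 a b s t hab hst); rewrite eq_sym.
case: (boolP [forall s, forall t, hh s t ==> (s == a) || (t == a)]) => Ha.
  exists a, b; split => // s t hst.
  move/forallP: Ha => /(_ s) /forallP /(_ t) /implyP /(_ hst) /orP [] /eqP; by [left | right].
move: Ha; rewrite negb_forall => /existsP [s]; rewrite negb_forall => /existsP [t].
rewrite negb_imply negb_or => /andP [hst /andP [sa ta]].
have [tb [hbt tba]] : exists tb, hh b tb /\ tb != a.
  case/or4P: (meet s t hst) => /eqP E.
  - by rewrite E eqxx in sa.
  - by exists t; rewrite -E.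
  - by rewrite E eqxx in ta.
  - by exists s; rewrite -E hh_sym.
exists b, a; split; first by rewrite hh_sym.
move=> s' t' hst'.
case: (eqVneq s' b) => [->|s'b]; first by left.
case: (eqVneq t' b) => [->|t'b]; first by right.
exfalso.
have [ta' [hat' ta'b]] : exists ta', hh a ta' /\ ta' != b.
  case/or4P: (meet s' t' hst') => /eqP E.
  - by exists t'; rewrite -E.
  - by rewrite E eqxx in s'b.
  - by exists s'; rewrite -E hh_sym.
  - by rewrite E eqxx in t'b.
case: (eqVneq ta' tb) => [E|ne].
  by apply: (tri a b tb hab hbt); rewrite -E.
apply: (noP4 ta' a b tb) => //; first by rewrite hh_sym.
by rewrite eq_sym.
Qed.

Lemma star_of_iso m : (2 <= m <= n)%N -> isomorphic e (K1_KK n m) ->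
  exists c s, hh c s /\ (forall x y, hh x y -> x = c \/ y = c).
Proof.
case/andP => m2 mn [f [[g fg gf] fe]].
have n2 : (2 <= n)%N := leq_trans m2 mn.
have n0 : (0 < n)%N by apply: leq_trans n2.
have n1 : (n.-1 < n)%N by rewrite ltn_predL.
pose i0 : 'I_n := Ordinal n0.
pose i1 : 'I_n := Ordinal n1.
have finj : injective f := can_inj fg.
have blk_le : forall i : 'I_n, (block m i <= 2)%N.
  by move=> i; rewrite /block; case: ifP => //; case: ifP.
have blk0 : forall i : 'I_n, block m i = 0%N -> i = i0.
  move=> i; rewrite /block; case: ifP => [/eqP iz _|]; last by case: ifP.
  by apply: val_inj.
have b0 : block m i0 = 0%N by [].
have b1 : block m i1 = 2%N.
  rewrite /block /=.
  have -> : (n.-1 == 0%N) = false by case: (n) n2 => [|[|k]].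
  have -> : (n.-1 <= n - m)%N = false.
    apply/negbTE; rewrite -ltnNge.
    case: (n) n2 mn => [|k] //= _ km.
    lia.
  by [].
exists (g i0), (g i1); split.
  rewrite /hh fe !gf /K1_KK b0 b1 /= andbF andbT.
  apply/eqP => /(congr1 f); rewrite !gf => /(congr1 val) /=.
  by case: (n) n2 => [|[|k]].
move=> x y /andP [xy nexy].
move: nexy; rewrite fe /K1_KK (inj_eq finj) xy /=.
move: (blk_le (f x)) (blk_le (f y)) (@blk0 (f x)) (@blk0 (f y)).
case: (block m (f x)) => [|[|[|]]] //; case: (block m (f y)) => [|[|[|]]] //=.
all: move=> _ _ h1 h2 _; first [by left; apply: finj; rewrite (h1 erefl) gf |
                                by right; apply: finj; rewrite (h2 erefl) gf].
Qed.

End Graph.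

Theorem mainTheorem2 (R : rcfType) (T : finType) (e : rel T) :
  simple_graph e ->
  alpha e = 2%N ->
  (mG_closed e (0 : R) (#|T| - 2)%N%:R = 2%N <->
   exists m : nat, (2 <= m <= #|T|)%N /\ isomorphic e (K1_KK #|T| m)).
Proof.
move=> sg a2.
have [a [b hab]] := alpha_edge sg a2.
have n2 : (2 <= #|T|)%N.
  have := max_card [set a; b]; rewrite cards2.
  by have /andP [-> _] := hab.
rewrite (mG_cnt (R := R) sg).
split.
- move=> c2.
  have no2K2 : forall a b c d, hh e a b -> hh e c d -> a != c -> a != d -> b != c -> b != d -> False.
    move=> a' b' c' d' h1 h2 h3 h4 h5 h6.
    by have := twoK2_cnt R sg h1 h2 h3 h4 h5 h6 n2; rewrite c2.
  have noP4 : forall a b c d, hh e a b -> hh e b c -> hh e c d -> a != c -> a != d -> b != d -> False.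
    move=> a' b' c' d' h1 h2 h3 h4 h5 h6.
    by have := P4_cnt R sg h1 h2 h3 h4 h5 h6 n2; rewrite c2.
  have [c [x0 [hcx star]]] := center sg hab (alpha_tri sg a2) no2K2 noP4.
  exact: (iso_of_star sg hcx star).
- move=> [m [hm iso]].
  have [c [s [hcs star]]] := star_of_iso hm iso.
  apply/eqP; rewrite eqn_leq (star_cnt R sg star n2).
  exact: (edge_cnt R sg hcs n2).
Qed.
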